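(* For every $n\ge1$ and every $0\le\rho\le\rho^*$, $\mathbf{MaxStab}^{\mathrm{sym}}_1(\tfrac12)$ is attained by dictator functions, i.e. for every $f:\{-1,1\}^n\to\{0,1\}$ with $\mathbb Ef(\mathbf X)=\tfrac12$, $$\mathbb E[\Phi^{\mathrm{sym}}_1(T_\rho f(\mathbf X))]\le \tfrac{1-\rho}{2}\ln\tfrac{1-\rho}{2}+\tfrac{1+\rho}{2}\ln\tfrac{1+\rho}{2},$$ the right-hand side being the value for the dictator function $f(\mathbf x)=1\{x_1=1\}$.
   Context: $\mathbf X$ uniform on $\{-1,1\}^n$; $\mathbf Y$ obtained by independently flipping each coordinate of $\mathbf X$ with probability $(1-\rho)/2$; $T_\rho f(\mathbf x)=\mathbb E[f(\mathbf Y)\mid\mathbf X=\mathbf x]$. $\Phi^{\mathrm{sym}}_1(t)=t\ln t+(1-t)\ln(1-t)$ on $[0,1]$ with $0\ln0=0$. $\mathbf{MaxStab}^{\mathrm{sym}}_1(a)$ is the maximum of $\mathbb E[\Phi^{\mathrm{sym}}_1(T_\rho f(\mathbf X))]$ over Boolean $f:\{-1,1\}^n\to\{0,1\}$ with $\mathbb Ef(\mathbf X)=a$. Dictator functions are $1\{x_k=1\}$ and $1\{x_k=-1\}$, $k\in[n]$. $\rho^*\approx0.461491$ is the unique zero in $(0,\tfrac12]$ of $\psi(\rho)=(1+\rho^2)\ln\frac{1+\rho}{2}-(1-\rho)^2\ln\frac{1-\rho}{2}$. *)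

(* Defs.v *)
From HB Require Import structures.
From mathcomp Require Import all_boot all_order all_algebra.
From mathcomp Require Import all_classical all_reals.
From mathcomp Require Import exp.
Set Implicit Arguments. Unset Strict Implicit. Unset Printing Implicit Defensive.
Import Order.TTheory GRing.Theory Num.Theory.
Local Open Scope ring_scope.

(* The discrete cube {-1,1}^n: a point is x : 'I_n -> bool,
   with (x i = true) encoding x_i = 1 and (x i = false) encoding x_i = -1. *)
Definition cube (n : nat) := {ffun 'I_n -> bool}.

Definition boolfun (n : nat) := cube n -> bool.

Section Defs.
Variable R : realType.

Definition mean (n : nat) (g : cube n -> R) : R :=
  (2 ^+ n)^-1 * \sum_(x : cube n) g x.

(* P(Y = y | X = x): each coordinate flipped independently w.p. (1-rho)/2. *)
Definition noise_kernel (rho : R) (n : nat) (x y : cube n) : R :=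
  \prod_(i < n) (if x i == y i then (1 + rho) / 2 else (1 - rho) / 2).

Definition T_rho (rho : R) (n : nat) (f : boolfun n) (x : cube n) : R :=
  \sum_(y : cube n) noise_kernel rho x y * (f y)%:R.

(* Phi^sym_1(t) = t ln t + (1-t) ln (1-t); the convention 0 ln 0 = 0 is made
   explicit. *)
Definition xlnx (t : R) : R := if t == 0 then 0 else t * ln t.
Definition Phi_sym1 (t : R) : R := xlnx t + xlnx (1 - t).

Definition stab_sym1 (rho : R) (n : nat) (f : boolfun n) : R :=
  mean (fun x => Phi_sym1 (T_rho rho f x)).

Definition psi (rho : R) : R :=
  (1 + rho ^+ 2) * ln ((1 + rho) / 2) - (1 - rho) ^+ 2 * ln ((1 - rho) / 2).

End Defs.

Definition dictator (n : nat) (k : 'I_n) : boolfun n := fun x => x k.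
Definition antidictator (n : nat) (k : 'I_n) : boolfun n := fun x => ~~ x k.

(* Main.v *)
Require Import Defs.
From HB Require Import structures.
From mathcomp Require Import all_boot all_order all_algebra.
From mathcomp Require Import all_classical all_reals.
From mathcomp Require Import exp.
From mathcomp Require Import topology normedtype sequences derive realfun.
From mathcomp Require Import ring lra.
Import Order.TTheory GRing.Theory Num.Theory numFieldNormedType.Exports.
Local Open Scope ring_scope.
Local Open Scope classical_set_scope.

Section S.
Variable R : realType.

Lemma is_derive_lnc (g : R -> R) (x dg : R) : 0 < g x -> is_derive x 1 g dg ->
  is_derive x 1 (fun t => ln (g t)) (dg / g x).
Proof.
move=> gx dgx.
have := @is_derive1_comp R (@ln R) g x (g x)^-1 dg (is_derive1_ln gx) dgx.
by rewrite mulrC.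
Qed.

Lemma mvt_ex (f df : R -> R) (a b : R) : a < b ->
  (forall x, a <= x <= b -> is_derive x 1 f (df x)) ->
  exists c, a < c < b /\ f b - f a = df c * (b - a).
Proof.
move=> ltab hd.
have cont : {within `[a, b], continuous f}.
  apply: derivable_within_continuous => x hx.
  have hx' : a <= x <= b by move: hx; rewrite in_itv.
  have H := hd x hx'.
  exact: ex_derive.
have hd' : forall x, x \in `]a, b[%R -> is_derive x 1 f (df x).
  move=> x; rewrite in_itv/= => /andP[h1 h2]; apply: hd.
  by rewrite !ltW.
have [c hc E] := MVT ltab hd' cont.
by exists c; split => //; move: hc; rewrite in_itv.
Qed.

Lemma incr_deriv (f df : R -> R) (a b : R) : a <= b ->
  (forall x, a <= x <= b -> is_derive x 1 f (df x)) ->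
  (forall x, a < x < b -> 0 <= df x) -> f a <= f b.
Proof.
move=> ab hd hpos; case: (ltgtP a b) ab => // [ltab|->] _; last by [].
have [c [hc E]] := @mvt_ex f df a b ltab hd.
by rewrite -subr_ge0 E mulr_ge0 // ?hpos // subr_ge0 ltW.
Qed.

Lemma decr_deriv (f df : R -> R) (a b : R) : a <= b ->
  (forall x, a <= x <= b -> is_derive x 1 f (df x)) ->
  (forall x, a < x < b -> df x <= 0) -> f b <= f a.
Proof.
move=> ab hd hneg.
have := @incr_deriv (fun x => - f x) (fun x => - df x) a b ab.
rewrite lerN2; apply.
  by move=> x hx; apply: is_deriveN; apply: hd.
by move=> x hx; rewrite oppr_ge0 hneg.
Qed.

Lemma ln_ge_1m (x : R) : 0 < x -> 1 - x^-1 <= ln x.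
Proof.
move=> x0.
have := @le_ln1Dx R (x^-1 - 1).
have -> : 1 + (x^-1 - 1) = x^-1 by ring.
rewrite lnV ?posrE // => H.
have : -1 < x^-1 - 1 by rewrite ltrBrDr addrC subrr invr_gt0.
by move/H; lra.
Qed.

Lemma ln_le_m1 (x : R) : 0 < x -> ln x <= x - 1.
Proof.
move=> x0; have := @le_ln1Dx R (x - 1).
have -> : 1 + (x - 1) = x by ring.
by apply; lra.
Qed.

End S.
Arguments is_derive_lnc {R g x dg}.
Section S2.
Variable R : realType.

Definition phi0 (t : R) := (1+t)/2 * ln ((1+t)/2) + (1-t)/2 * ln ((1-t)/2).
Definition Af (t : R) := (ln ((1+t)/2) - ln ((1-t)/2)) / 2.

Lemma d_lna (t : R) : -1 < t -> is_derive t 1 (fun t => ln ((1 + t) / 2)) (1 + t)^-1.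
Proof.
move=> ht.
have h1 : is_derive t (1:R) (fun t : R => (1 + t) / 2) (2^-1).
  by apply: is_derive_eq; rewrite scaler0 !add0r [_ *: _]mulr1.
have p : 0 < (1 + t) / 2 by lra.
apply: (is_derive_eq (@is_derive_lnc R (fun t => (1 + t) / 2) _ _ p h1)).
field; lra.
Qed.

Lemma d_lnb (t : R) : t < 1 -> is_derive t 1 (fun t => ln ((1 - t) / 2)) (- (1 - t)^-1).
Proof.
move=> ht.
have h1 : is_derive t (1:R) (fun t : R => (1 - t) / 2) (- 2^-1).
  by apply: is_derive_eq; rewrite !scaler0 !add0r mul1r [_ *: _]mulrN1.
have p : 0 < (1 - t) / 2 by lra.
apply: (is_derive_eq (@is_derive_lnc R (fun t => (1 - t) / 2) _ _ p h1)).
field; lra.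
Qed.

Lemma d_phi0 (t : R) : -1 < t < 1 -> is_derive t 1 phi0 (Af t).
Proof.
case/andP=> h1 h2.
have Ha := d_lna t h1; have Hb := d_lnb t h2.
rewrite /phi0 /Af; apply: is_derive_eq.
rewrite /GRing.scale /=.
field; lra.
Qed.

Lemma d_Af (t : R) : -1 < t < 1 -> is_derive t 1 Af ((1 - t^+2)^-1).
Proof.
case/andP=> h1 h2.
have Ha := d_lna t h1; have Hb := d_lnb t h2.
rewrite /Af; apply: is_derive_eq.
rewrite /GRing.scale /=.
have h3 : 1 - t^+2 != 0 by rewrite expr2; apply/eqP; nra.
field; lra.
Qed.

End S2.
Arguments phi0 {R}.
Arguments Af {R}.
Arguments d_phi0 {R t}.
Arguments d_Af {R t}.
Arguments mvt_ex {R f df a b}.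
Arguments incr_deriv {R f df a b}.
Arguments decr_deriv {R f df a b}.
Arguments ln_ge_1m {R x}.
Arguments ln_le_m1 {R x}.
Section S3.
Variable R : realType.

Lemma Af_lb (r : R) : 0 < r <= 2^-1 -> 2/3 * r <= Af r.
Proof.
case/andP=> r0 r1.
have a0 : 0 < (1+r)/2 by lra.
have b0 : 0 < (1-r)/2 by lra.
have := ln_ge_1m (divr_gt0 a0 b0).
rewrite ln_div ?posrE // /Af.
have -> : 1 - ((1 + r) / 2 / ((1 - r) / 2))^-1 = 2 * r / (1 + r) by field; lra.
have : 4/3 * r <= 2 * r / (1 + r) by rewrite ler_pdivlMr; nra.
lra.
Qed.

Lemma inv_le43 (x : R) : 0 <= x <= 2^-1 -> (1 - x^+2)^-1 <= 4/3.
Proof.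
case/andP=> x0 x1.
have p : 0 < 1 - x^+2 by rewrite expr2; nra.
rewrite -div1r ler_pdivrMr //; rewrite expr2; nra.
Qed.

Lemma G_le0 (r s : R) : 0 < r <= 2^-1 -> 0 <= psi r -> 0 <= s <= 1 ->
  phi0 s <= phi0 r + Af r / r * (s^+2 - r * s).
Proof.
move=> /andP[r0 r1] hpsi /andP[s0 s1].
pose c := Af r / r.
have hc : 2/3 <= c by rewrite /c ler_pdivlMr //; have := @Af_lb r; rewrite r0 r1; apply.
have cr : c * r = Af r by rewrite /c divfK // gt_eqF.
pose G := fun t => phi0 t - phi0 r - c * (t^+2 - r * t).
pose G1 := fun t => Af t - c * (2 * t - r).
pose G2 := fun t : R => (1 - t^+2)^-1 - 2 * c.
suff : G s <= 0 by rewrite /G /c; lra.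
have dG : forall t : R, -1 < t < 1 -> is_derive t 1 G (G1 t).
  move=> t ht; have H := d_phi0 ht.
  rewrite /G /G1; apply: is_derive_eq.
  rewrite /GRing.scale /=; ring.
have dG1 : forall t : R, -1 < t < 1 -> is_derive t 1 G1 (G2 t).
  move=> t ht; have H := d_Af ht.
  rewrite /G1 /G2; apply: is_derive_eq.
  rewrite /GRing.scale /=; ring.
have Gr : G r = 0 by rewrite /G; ring.
have G1r : G1 r = 0 by rewrite /G1 -cr; ring.
have G1pos : forall t, 0 <= t <= r -> 0 <= G1 t.
  move=> t /andP[t0 tr].
  rewrite -G1r; apply: (decr_deriv tr).
    by move=> x /andP[h1 h2]; apply: dG1; apply/andP; split; lra.
  move=> x /andP[h1 h2]; rewrite /G2.
  have : (1 - x^+2)^-1 <= 4/3 by apply: inv_le43; apply/andP; split; lra.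
  lra.
have P : forall t1 u, r < t1 -> t1 <= u -> u < 1 -> 0 < G1 t1 -> 0 < G1 u.
  move=> t1 u rt1 t1u u1 gt1.
  have [xi [/andP[xi1 xi2] E]] := @mvt_ex _ G1 G2 r t1 rt1
    (fun x hx => dG1 x (ltac:(case/andP: hx => h1 h2; apply/andP; split; lra))).
  rewrite G1r subr0 in E.
  have g2 : 0 < G2 xi by move: gt1; rewrite E pmulr_lgt0 // subr_gt0.
  have : G1 t1 <= G1 u.
    apply: (incr_deriv t1u).
      by move=> x /andP[h1 h2]; apply: dG1; apply/andP; split; lra.
    move=> x /andP[h1 h2].
    suff : G2 xi <= G2 x by lra.
    rewrite /G2 lerD2r lef_pV2 ?posrE; first by rewrite lerD2l lerN2 expr2 expr2; nra.
      by rewrite expr2; nra.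
    by rewrite expr2; nra.
  lra.
have p1 : phi0 1 = 0 :> R.
  rewrite /phi0 subrr mul0r mul0r addr0.
  have -> : (1 + 1) / 2 = 1 :> R by field.
  by rewrite ln1 mulr0.
have G1le : G 1 <= 0.
  have id : r * (phi0 r + c * (1 - r)) = psi r / 2.
    have -> : r * (phi0 r + c * (1 - r)) = r * phi0 r + (c * r) * (1 - r) by ring.
    by rewrite cr /psi /phi0 /Af; field.
  have : 0 <= phi0 r + c * (1 - r).
    by rewrite -(pmulr_rge0 _ r0) id; lra.
  by rewrite /G p1; lra.
case: (lerP s r) => [sr|rs].
  rewrite -Gr; apply: (incr_deriv sr).
    by move=> x /andP[h1 h2]; apply: dG; apply/andP; split; lra.
  by move=> x /andP[h1 h2]; apply: G1pos; apply/andP; split; lra.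
case: (ltrP s 1) => [sl1|s1']; last first.
  by have -> : s = 1 by apply/eqP; rewrite eq_le s1 s1'.
case: (lerP (G1 s) 0) => hG1s.
  rewrite -Gr; apply: (decr_deriv (ltW rs)).
    by move=> x /andP[h1 h2]; apply: dG; apply/andP; split; lra.
  move=> x /andP[h1 h2]; rewrite leNgt; apply/negP => hx.
  have := P x s h1 (ltW h2) sl1 hx; lra.
pose e := expR (- (4 * c)).
have e0 : 0 < e by apply: expR_gt0.
pose u := Num.max s (1 - 2 * e).
have su : s <= u by rewrite /u le_max lexx.
have eu : 1 - 2 * e <= u by rewrite /u le_max lexx orbT.
have u1 : u < 1 by rewrite /u gt_max sl1 /=; lra.
have Gsu : G s <= G u.
  apply: (incr_deriv su).
    by move=> x /andP[h1 h2]; apply: dG; apply/andP; split; lra.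
  move=> x /andP[h1 h2]; apply: ltW; apply: (P s x rs (ltW h1) _ hG1s); lra.
suff : G u <= G 1 by lra.
have lnb : ln ((1 - u) / 2) <= - (4 * c).
  rewrite -[X in _ <= X](expRK) ler_ln ?posrE //; [rewrite -/e; lra|lra].
have lna : ln ((1 + u) / 2) <= 0 by apply: ln_le0; lra.
have ha : (1 + u) / 2 * ln ((1 + u) / 2) <= 0.
  by apply: mulr_ge0_le0 => //; lra.
have hb : (1 - u) / 2 * ln ((1 - u) / 2) <= (1 - u) / 2 * (- (4 * c)).
  by apply: ler_wpM2l => //; lra.
have hcu : 0 <= c * (1 - u) by apply: mulr_ge0; lra.
have hm : c * (1 - u) * (u - r - 1) <= 0 by apply: mulr_ge0_le0 => //; lra.
rewrite /G p1 /phi0.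
nra.
Qed.
End S3.
Section S4.
Variable R : realType.

Lemma ln2_le : ln (2 : R) <= 5/6.
Proof.
have -> : (2 : R) = 4/3 * (3/2) by field.
have p1 : (4/3 : R) \in Num.pos by rewrite posrE; lra.
have p2 : (3/2 : R) \in Num.pos by rewrite posrE; lra.
rewrite lnM //.
have h1 := @ln_le_m1 R (4/3) ltac:(lra).
have h2 := @ln_le_m1 R (3/2) ltac:(lra).
lra.
Qed.

Lemma psi_small (r : R) : 0 < r <= 1/10 -> 0 < psi r.
Proof.
case/andP=> r0 r1.
have l2 := ln2_le.
have ea : ln ((1 + r) / 2) = ln (1 + r) - ln 2 by rewrite ln_div // posrE; lra.
have eb : ln ((1 - r) / 2) = ln (1 - r) - ln 2 by rewrite ln_div // posrE; lra.
have la : r / (1 + r) <= ln (1 + r).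
  have := @ln_ge_1m R (1 + r) ltac:(lra).
  have -> : 1 - (1 + r)^-1 = r / (1 + r) by field; lra.
  done.
have la' : r - r^+2 <= r / (1 + r) by rewrite ler_pdivlMr; [rewrite expr2; nra| lra].
have lb : ln (1 - r) <= - r by have := @ln_le_m1 R (1 - r) ltac:(lra); lra.
have la0 : 0 <= ln (1 + r) by apply: ln_ge0; lra.
rewrite /psi ea eb.
rewrite !expr2 in la' *.
nra.
Qed.

Lemma psi_cont (a b : R) : 0 < a -> b < 1 -> {within `[a, b], continuous (@psi R)}.
Proof.
move=> a0 b1; apply: derivable_within_continuous => x hx.
have hx' : a <= x <= b by move: hx; rewrite in_itv.
case/andP: hx' => h1 h2.
have Ha := @d_lna R x ltac:(lra).
have Hb := @d_lnb R x ltac:(lra).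
rewrite /psi.
exact: ex_derive.
Qed.

Lemma psi_nonneg (rs r : R) : 0 < rs <= 2^-1 ->
  (forall x, 0 < x <= 2^-1 -> psi x = 0 -> x = rs) -> 0 < r <= rs -> 0 <= psi r.
Proof.
move=> /andP[rs0 rs1] uniq /andP[r0 r1].
rewrite leNgt; apply/negP => hneg.
case: (lerP r (1/10)) => hr.
  have h : 0 < r <= 1/10 by apply/andP; split; lra.
  by have := psi_small _ h; lra.
have h10 : 0 < (1/10 : R) <= 1/10 by apply/andP; split; lra.
have hs := psi_small _ h10.
have hv : Num.min (psi (1/10)) (psi r) <= 0 <= Num.max (psi (1/10)) (psi r).
  apply/andP; split.
    by rewrite ge_min; apply/orP; right; lra.
  by rewrite le_max; apply/orP; left; lra.
have [c hc pc] := @IVT R (@psi R) (1/10) r 0 (ltW hr) (@psi_cont (1/10) r (ltac:(lra)) (ltac:(lra))) hv.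
have hc' : 1/10 <= c <= r by move: hc; rewrite in_itv.
case/andP: hc' => c1 c2.
have := uniq c (ltac:(apply/andP; split; lra)) pc.
move=> ec; rewrite ec in c2.
have rc : r = c by rewrite ec; apply/eqP; rewrite eq_le r1 c2.
by move: hneg; rewrite rc pc ltxx.
Qed.
End S4.
Arguments G_le0 {R r s}.
Arguments psi_nonneg {R rs r}.
Arguments Af_lb {R r}.
Section S5.
Variable R : realType.
Local Notation K := (@noise_kernel R).

Lemma exch n (F : 'I_n -> bool -> R) :
  \sum_(y : cube n) \prod_i F i (y i) = \prod_i \sum_(b : bool) F i b.
Proof. by rewrite bigA_distr_bigA. Qed.

Definition kk (t : R) (a b : bool) : R := if a == b then (1 + t) / 2 else (1 - t) / 2.

Lemma kernelE t n (x y : cube n) : K t x y = \prod_i kk t (x i) (y i).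
Proof. by []. Qed.

Lemma kernel_sum1 t n (x : cube n) : \sum_y K t x y = 1.
Proof.
under eq_bigr do rewrite kernelE.
rewrite (@exch _ (fun i b => kk t (x i) b)); apply: big1 => i _.
by rewrite big_bool /= /kk; case: (x i) => /=; field.
Qed.

Lemma kernel_sym t n (x y : cube n) : K t x y = K t y x.
Proof. by apply: eq_bigr => i _; rewrite eq_sym. Qed.

Lemma kernel_ge0 t n (x y : cube n) : -1 <= t <= 1 -> 0 <= K t x y.
Proof.
case/andP=> t1 t2; apply: prodr_ge0 => i _; case: ifP => _; lra.
Qed.

Lemma kernel_comp t s n (x z : cube n) :
  \sum_y K t x y * K s y z = K (t * s) x z.
Proof.
under eq_bigr do rewrite !kernelE -big_split /=.
rewrite (@exch _ (fun i b => kk t (x i) b * kk s b (z i))) kernelE; apply: eq_bigr => i _.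
by rewrite big_bool /= /kk; case: (x i); case: (z i) => /=; field.
Qed.

Definition sgb (b : bool) : R := if b then 1 else -1.
Definition chi n (S x : cube n) : R := \prod_i (if S i then sgb (x i) else 1).
Definition cS (t : R) n (S : cube n) : R := \prod_i (if S i then t else 1).
Arguments chi {n}. Arguments cS t {n}.

Lemma kernel_fourier t n (x y : cube n) :
  K t x y = (2^-1)^+n * \sum_S cS t S * chi S x * chi S y.
Proof.
have E : forall S : cube n, cS t S * chi S x * chi S y =
    \prod_i (if S i then t * sgb (x i) * sgb (y i) else 1).
  move=> S; rewrite /cS /chi -!big_split; apply: eq_bigr => i _; case: (S i); by rewrite /= ?mulr1.
under eq_bigr do rewrite E.
rewrite (@exch _ (fun i b => if b then t * sgb (x i) * sgb (y i) else 1)).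
have -> : (2^-1 : R)^+n = \prod_(i < n) 2^-1 by rewrite prodr_const card_ord.
rewrite -big_split; apply: eq_bigr => i _ /=.
by rewrite big_bool /= /sgb /kk; case: (x i); case: (y i) => /=; field.
Qed.

Definition QF t n (u : cube n -> R) := \sum_x \sum_y u x * K t x y * u y.
Arguments QF t {n}.

Lemma QF_fourier t n (u : cube n -> R) :
  QF t u = (2^-1)^+n * \sum_S cS t S * (\sum_x u x * chi S x)^+2.
Proof.
rewrite /QF.
transitivity (\sum_x \sum_y \sum_S (2^-1)^+n * (cS t S * (u x * chi S x) * (u y * chi S y))).
  apply: eq_bigr => x _; apply: eq_bigr => y _.
  rewrite kernel_fourier big_distrr big_distrr big_distrl /=.
  by apply: eq_bigr => S _; ring.
under eq_bigr => x _ do rewrite exchange_big.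
rewrite exchange_big big_distrr /=; apply: eq_bigr => S _.
rewrite expr2 big_distrlr /= big_distrr big_distrr /=; apply: eq_bigr => x _.
rewrite big_distrr /= big_distrr /=; apply: eq_bigr => y _.
ring.
Qed.



Lemma cS_sq t n (S : cube n) : cS (t * t) S = cS t S ^+ 2.
Proof.
rewrite /cS expr2 -big_split; apply: eq_bigr => i _ /=; case: (S i) => //.
by rewrite mulr1.
Qed.

Lemma cS_ge0 t n (S : cube n) : 0 <= t -> 0 <= cS t S.
Proof. by move=> t0; apply: prodr_ge0 => i _; case: (S i). Qed.

Lemma cS_le t n (S : cube n) (i : 'I_n) : 0 <= t <= 1 -> S i -> cS t S <= t.
Proof.
case/andP=> t0 t1 Si.
rewrite /cS (bigD1 i) //= Si.
have h : \prod_(j < n | j != i) (if S j then t else 1) <= 1.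
  by apply: prodr_ile1 => j _; case: (S j); apply/andP; split; lra.
have h0 : 0 <= \prod_(j < n | j != i) (if S j then t else 1).
  by apply: prodr_ge0 => j _; case: (S j).
nra.
Qed.

Lemma QF_ineq r n (g : cube n -> R) : 0 <= r <= 1 -> \sum_x g x = 0 ->
  QF (r * r) g <= r * QF r g.
Proof.
move=> /andP[r0 r1] g0.
rewrite !QF_fourier mulrCA; apply: ler_wpM2l; first by apply: exprn_ge0; rewrite invr_ge0.
rewrite big_distrr /=; apply: ler_sum => S _.
rewrite cS_sq.
case: (boolP [exists i, S i]) => [/existsP[i Si]|].
  have h1 : cS r S <= r by apply: (@cS_le r n S i) => //; rewrite r0 r1.
  have h2 := @cS_ge0 r n S r0.
  have h3 : 0 <= (\sum_x g x * chi S x) ^+ 2 by apply: sqr_ge0.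
  have h4 : 0 <= (r - cS r S) * (cS r S * (\sum_x g x * chi S x) ^+ 2).
    by apply: mulr_ge0; [lra| apply: mulr_ge0].
  move: h4; set A := (\sum_x g x * chi S x) ^+ 2; set c := cS r S => h4.
  rewrite expr2; nra.
rewrite negb_exists => /forallP hS.
have -> : \sum_x g x * chi S x = \sum_x g x.
  apply: eq_bigr => x _; rewrite /chi big1 ?mulr1 //.
  by move=> i _; move: (hS i); case: (S i).
by rewrite g0 expr0n !mulr0.
Qed.


Lemma xlnxE (t : R) : xlnx t = t * ln t.
Proof. by rewrite /xlnx; case: eqP => [->|_]; rewrite ?mul0r. Qed.

Lemma Phi_phi0 (s : R) : Phi_sym1 ((1 + s) / 2) = phi0 s.
Proof.
rewrite /Phi_sym1 !xlnxE /phi0.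
by have -> : 1 - (1 + s) / 2 = (1 - s) / 2 :> R by field.
Qed.

Lemma phi0N (s : R) : phi0 (- s) = phi0 s.
Proof. by rewrite /phi0 opprK addrC. Qed.

Lemma sum_const n (c : R) : \sum_(x : cube n) c = 2 ^+ n * c.
Proof.
have h : #|{: cube n}| = (2 ^ n)%N by rewrite card_ffun card_bool card_ord.
rewrite sumr_const (_ : #|xpredT| = (2 ^ n)%N); last exact: h.
by rewrite -[c *+ _]mulr_natl natrX.
Qed.

Lemma sumsq_QF t n (u : cube n -> R) :
  \sum_x (\sum_y K t x y * u y) ^+ 2 = QF (t * t) u.
Proof.
rewrite /QF.
transitivity (\sum_x \sum_y \sum_z (K t x y * u y) * (K t x z * u z)).
  by apply: eq_bigr => x _; rewrite expr2 big_distrlr.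
rewrite exchange_big; apply: eq_bigr => y _.
rewrite exchange_big; apply: eq_bigr => z _.
rewrite -kernel_comp big_distrr big_distrl /=; apply: eq_bigr => x _.
rewrite (@kernel_sym t n x y); ring.
Qed.

Lemma sumgw_QF t n (u : cube n -> R) :
  \sum_x u x * (\sum_y K t x y * u y) = QF t u.
Proof.
by rewrite /QF; apply: eq_bigr => x _; rewrite big_distrr; apply: eq_bigr => y _ /=; rewrite mulrA.
Qed.



Lemma main_ineq (rs r : R) n (f : boolfun n) : 0 < rs <= 2^-1 ->
  (forall x, 0 < x <= 2^-1 -> psi x = 0 -> x = rs) -> 0 <= r <= rs ->
  mean (fun x => (f x)%:R) = 2^-1 :> R -> stab_sym1 r f <= phi0 r.
Proof.
move=> hrs uniq /andP[r0 r1] hm.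
have rle : r <= 2^-1 by case/andP: hrs => _ h; lra.
pose g := fun x : cube n => 2 * (f x)%:R - 1 : R.
have gsum : \sum_x g x = 0.
  rewrite /mean in hm.
  have hf : \sum_x ((f x)%:R : R) = 2 ^+ n / 2.
    have p : (2 : R) ^+ n != 0 by apply: lt0r_neq0; apply: exprn_gt0.
    by rewrite -hm mulrA mulfV // mul1r.
  by rewrite /g sumrB -mulr_sumr /= hf sum_const; field.
pose w := fun x : cube n => \sum_y K r x y * g y.
have Tw : forall x, T_rho r f x = (1 + w x) / 2.
  move=> x.
  have E : w x = \sum_y (2 * (K r x y * (f y)%:R) - K r x y).
    by apply: eq_bigr => y _; rewrite /g; ring.
  by rewrite E sumrB -mulr_sumr kernel_sum1 /T_rho; field.
have stab_eq : stab_sym1 r f = (2 ^+ n)^-1 * \sum_x phi0 (w x).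
  by rewrite /stab_sym1 /mean; congr (_ * _); apply: eq_bigr => z _; rewrite Tw Phi_phi0.
have p2 : (0 : R) < 2 ^+ n by apply: exprn_gt0.
rewrite stab_eq ler_pdivrMl //.
case: (ltgtP r 0) r0 => // [rp|r00] _; last first.
  have w0 : forall x, w x = 0.
    move=> x.
    suff -> : w x = (2^-1 : R) ^+ n * \sum_y g y by rewrite gsum mulr0.
    rewrite /w mulr_sumr; apply: eq_bigr => y _; congr (_ * _).
    have -> : (2^-1 : R)^+n = \prod_(i < n) 2^-1 by rewrite prodr_const card_ord.
    rewrite /noise_kernel.
    by apply: eq_bigr => i _; rewrite r00; case: ifP => _; field.
  by under eq_bigr do rewrite w0; rewrite sum_const r00.
have hpsi : 0 <= psi r by apply: (psi_nonneg hrs uniq); rewrite rp r1.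
have hr : 0 < r <= 2^-1 by rewrite rp rle.
have hc : 2/3 <= Af r / r by rewrite ler_pdivlMr //; apply: Af_lb.
have kg0 : forall x y : cube n, 0 <= K r x y by move=> x y; apply: (@kernel_ge0 r n x y); apply/andP; split; lra.
have gn : forall y, `|g y| = 1 by move=> y; rewrite /g; case: (f y) => /=; rewrite ?mulr1 ?mulr0; [rewrite (_ : 2 - 1 = 1 :> R) ?normr1 //; ring | rewrite sub0r normrN normr1].
have wle : forall x, `|w x| <= 1.
  move=> x; rewrite -(@kernel_sum1 r n x).
  apply: le_trans (ler_norm_sum _ _ _) _; apply: ler_sum => y _.
  by rewrite normrM gn mulr1 ger0_norm.
have pw : forall x, phi0 (w x) <= phi0 r + Af r / r * (w x ^+ 2 - r * `|w x|).
  move=> x.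
  have := @G_le0 R r `|w x| hr hpsi (ltac:(by rewrite normr_ge0 wle)).
  rewrite real_normK ?num_real //.
  by case: (ler0P (w x)) => hx; rewrite ?ler0_norm ?phi0N // ltW.
apply: le_trans (ler_sum _ (fun x _ => pw x)) _.
rewrite big_split /= sum_const -mulr_sumr /= sumrB -mulr_sumr /=.
suff : \sum_x w x ^+ 2 - r * \sum_x `|w x| <= 0.
  move=> h; have : 0 <= Af r / r by lra.
  move=> hc0; have := mulr_ge0_le0 hc0 h.
  lra.
have e1 : \sum_x w x ^+ 2 = QF (r * r) g by rewrite -sumsq_QF.
have e2 : \sum_x g x * w x = QF r g by rewrite -sumgw_QF.
have qi := @QF_ineq r n g (ltac:(apply/andP; split; lra)) gsum.
have gw : \sum_x g x * w x <= \sum_x `|w x|.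
  apply: ler_sum => x _; apply: le_trans (ler_norm _) _.
  by rewrite normrM gn mul1r.
rewrite e1; rewrite -e2 in qi.
have : r * (\sum_x g x * w x) <= r * \sum_x `|w x| by apply: ler_wpM2l => //; lra.
lra.
Qed.



Lemma T_dict (r : R) n (k : 'I_n) (h : bool -> bool) (x : cube n) :
  \sum_y K r x y * (h (y k))%:R = kk r (x k) true * (h true)%:R + kk r (x k) false * (h false)%:R.
Proof.
have E : forall y : cube n, K r x y * (h (y k))%:R =
    \prod_i (kk r (x i) (y i) * (if i == k then (h (y i))%:R else 1)).
  move=> y; rewrite big_split /= kernelE; congr (_ * _).
  by rewrite (bigD1 k) //= eqxx big1 ?mulr1 // => i /negbTE ->.
under eq_bigr do rewrite E.
rewrite (@exch _ (fun i b => kk r (x i) b * (if i == k then (h b)%:R else 1))).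
rewrite (bigD1 k) //= big_bool /= eqxx big1 ?mulr1 // => i /negbTE ik.
by rewrite big_bool /= ik !mulr1 /kk; case: (x i) => /=; field.
Qed.

Lemma dict_stab (r : R) n (k : 'I_n) (h : bool -> bool) : h true = ~~ h false ->
  stab_sym1 r (fun y : cube n => h (y k)) = phi0 r.
Proof.
move=> hh.
rewrite /stab_sym1 /mean.
have -> : \sum_(x : cube n) Phi_sym1 (T_rho r (fun y : cube n => h (y k)) x) = \sum_(x : cube n) phi0 r.
  apply: eq_bigr => x _.
  rewrite /T_rho T_dict hh /kk.
  by case: (h false); case: (x k) => /=; rewrite ?mulr1 ?mulr0 ?addr0 ?add0r ?Phi_phi0 ?phi0N.
rewrite sum_const mulrA mulVf ?mul1r //.
by apply: lt0r_neq0; apply: exprn_gt0.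
Qed.

End S5.

Local Close Scope classical_set_scope.

Theorem corollary2p4 (R : realType) (rhostar : R)
  (Hrs : 0 < rhostar <= 2^-1) (Hpsi : psi rhostar = 0)
  (Huniq : forall r : R, 0 < r <= 2^-1 -> psi r = 0 -> r = rhostar)
  (n : nat) (Hn : (1 <= n)%N) (rho : R) (Hrho : 0 <= rho <= rhostar) :
  (forall f : boolfun n,
     mean (fun x => (f x)%:R) = 2^-1 :> R ->
     stab_sym1 rho f <=
       (1 - rho) / 2 * ln ((1 - rho) / 2) + (1 + rho) / 2 * ln ((1 + rho) / 2))
  /\
  (forall k : 'I_n,
     stab_sym1 rho (dictator k) =
       (1 - rho) / 2 * ln ((1 - rho) / 2) + (1 + rho) / 2 * ln ((1 + rho) / 2)
   /\ stab_sym1 rho (antidictator k) =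
       (1 - rho) / 2 * ln ((1 - rho) / 2) + (1 + rho) / 2 * ln ((1 + rho) / 2)).
Proof.
have ephi : (1 - rho) / 2 * ln ((1 - rho) / 2) + (1 + rho) / 2 * ln ((1 + rho) / 2)
  = phi0 rho by rewrite /phi0 addrC.
rewrite ephi; split.
  by move=> f hm; apply: (@main_ineq R rhostar rho n f Hrs Huniq Hrho hm).
move=> k; split.
  exact: (@dict_stab R rho n k (fun b => b) erefl).
exact: (@dict_stab R rho n k negb erefl).
Qed.
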